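(* Let $\lambda\in\mathbb{C}$ and $n,k\in\mathbb{N}_0$. Then $$\int_{0}^{1}y_{3}(n,k;\lambda;1,x)\,dx=\frac{1}{n+1}\sum_{m=0}^{n}k^{m}\,y_{1}(n-m,k;\lambda),$$ or equivalently $$\int_{0}^{1}y_{3}(n,k;\lambda;1,x)\,dx=\frac{1}{(n+1)k!}\sum_{j=0}^{k}\binom{k}{j}\lambda^{j}\sum_{m=0}^{n}k^{m}j^{n-m}.$$
   Context: For $a,b\in\mathbb{R}$, $\lambda\in\mathbb{C}$ and $k\in\mathbb{N}_0$: the numbers $y_3(n,k;\lambda;a,b)$ are defined by $\frac{e^{bkt}}{k!}(\lambda e^{(a-b)t}+1)^{k}=\sum_{n\ge0}y_{3}(n,k;\lambda;a,b)\frac{t^{n}}{n!}$ (so $y_3(n,k;\lambda;1,x)$ is a polynomial in $x$), and the numbers $y_1(n,k;\lambda)$ by $\frac{1}{k!}(\lambda e^{t}+1)^{k}=\sum_{n\ge0}y_{1}(n,k;\lambda)\frac{t^{n}}{n!}$. Convention: $0^0=1$. *)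

(* Defs.v *)
From Stdlib Require Import Reals Factorial.
From Coquelicot Require Import Coquelicot.
Open Scope R_scope.

Definition egf (c : nat -> C) (F : R -> C) : Prop :=
  forall t : R, is_series (fun n => Cmult (RtoC (t ^ n / INR (fact n))) (c n)) (F t).

Definition gen_y3 (k : nat) (lam : C) (a b : R) (t : R) : C :=
  Cmult (RtoC (exp (b * INR k * t) / INR (fact k)))
        (Cpow (Cplus (Cmult lam (RtoC (exp ((a - b) * t)))) (RtoC 1)) k).

Definition gen_y1 (k : nat) (lam : C) (t : R) : C :=
  Cmult (RtoC (/ INR (fact k)))
        (Cpow (Cplus (Cmult lam (RtoC (exp t))) (RtoC 1)) k).

Definition Csum (f : nat -> C) (N : nat) : C := @sum_n C_Ring f N.

Definition CRInt (f : R -> C) (a b : R) : C := @RInt C_R_CompleteNormedModule f a b.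

(* Main.v *)
Require Import Defs.
From Stdlib Require Import Reals Factorial Lia Lra.
From Coquelicot Require Import Coquelicot.
Open Scope R_scope.



Lemma Re_sum_n (f : nat -> C) N : Re (@sum_n C_Ring f N) = sum_n (fun n => Re (f n)) N.
Proof.
  induction N. rewrite !sum_O. reflexivity.
  rewrite !sum_Sn. simpl. rewrite <- IHN. reflexivity.
Qed.

Lemma Im_sum_n (f : nat -> C) N : Im (@sum_n C_Ring f N) = sum_n (fun n => Im (f n)) N.
Proof.
  induction N. rewrite !sum_O. reflexivity.
  rewrite !sum_Sn. simpl. rewrite <- IHN. reflexivity.
Qed.

Lemma series_Re (f : nat -> C) l :
  @is_series C_AbsRing C_NormedModule f l ->
  @is_series R_AbsRing R_NormedModule (fun n => Re (f n)) (Re l).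
Proof.
  intros H. unfold is_series in *.
  apply filterlim_locally. intros eps.
  generalize (proj1 (filterlim_locally _ _) H eps). apply filter_imp.
  intros N [H1 H2]. change (sum_n (fun n => Re (f n)) N) with
    (@sum_n R_AbelianMonoid (fun n => Re (f n)) N).
  rewrite <- Re_sum_n. exact H1.
Qed.

Lemma series_Im (f : nat -> C) l :
  @is_series C_AbsRing C_NormedModule f l ->
  @is_series R_AbsRing R_NormedModule (fun n => Im (f n)) (Im l).
Proof.
  intros H. unfold is_series in *.
  apply filterlim_locally. intros eps.
  generalize (proj1 (filterlim_locally _ _) H eps). apply filter_imp.
  intros N [H1 H2].
  rewrite <- Im_sum_n. exact H2.
Qed.

Lemma series_RtoC (f : nat -> R) l :
  @is_series R_AbsRing R_NormedModule f l ->
  @is_series C_AbsRing C_NormedModule (fun n => RtoC (f n)) (RtoC l).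
Proof.
  intros H. unfold is_series in *.
  apply filterlim_locally. intros eps.
  generalize (proj1 (filterlim_locally _ _) H eps). apply filter_imp.
  intros N H1. split.
  - rewrite Re_sum_n. exact H1.
  - rewrite Im_sum_n. simpl. 
    assert (Z: forall M, @sum_n R_AbelianMonoid (fun _ : nat => 0) M = 0).
    { induction M. rewrite sum_O; reflexivity. rewrite sum_Sn, IHM. simpl. unfold plus; simpl. ring. }
    rewrite Z. apply ball_center.
Qed.



Lemma real_unique (a : nat -> R) :
  (forall t, @is_series R_AbsRing R_NormedModule (fun n => t^n / INR (fact n) * a n) 0) ->
  forall n, a n = 0.
Proof.
  intros H n.
  set (b := fun n => a n / INR (fact n)).
  assert (Hb : forall t, is_pseries b t 0).
  { intros t. unfold is_pseries. eapply is_series_ext; [|apply (H t)].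
    intros m. rewrite pow_n_pow. unfold b, scal; simpl. unfold mult; simpl. field.
    apply INR_fact_neq_0. }
  assert (HP : forall t, PSeries b t = 0).
  { intros t. apply is_pseries_unique. apply Hb. }
  assert (HR : Rbar_lt 0 (CV_radius b)).
  { destruct (Rbar_lt_dec (CV_radius b) (Rabs 1)) as [Hl|Hl].
    - exfalso. apply (CV_disk_outside b 1 Hl).
      eapply is_lim_seq_ext; [|apply ex_series_lim_0; exists 0; apply (Hb 1)].
      intros m. simpl. rewrite pow_n_pow, pow1. unfold scal; simpl. unfold mult; simpl. ring.
    - rewrite Rabs_R1 in Hl. destruct (CV_radius b) as [r| |]; simpl in *; auto.
      lra. }
  generalize (Derive_n_coef b n HR).
  rewrite (Derive_n_ext _ (fun _ => 0) n 0 HP).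
  intros E.
  assert (E2 : Derive_n (fun _ : R => 0) n 0 = 0).
  { destruct n. reflexivity. apply Derive_n_const. }
  rewrite E2 in E. unfold b in E.
  assert (F := INR_fact_neq_0 n).
  field_simplify in E; auto.
Qed.



Lemma is_series_ext_l (a b : nat -> R) l l' :
  @is_series R_AbsRing R_NormedModule a l -> l = l' -> (forall n, a n = b n) ->
  @is_series R_AbsRing R_NormedModule b l'.
Proof. intros H E H2. subst. eapply is_series_ext; eauto. Qed.

Lemma egf_unique c d F : egf c F -> egf d F -> forall n, c n = d n.
Proof.
  intros H1 H2.
  pose proof (fun t => @is_series_minus C_AbsRing C_NormedModule _ _ _ _ (H1 t) (H2 t)) as HD.
  assert (HRe : forall n, Re (c n) - Re (d n) = 0).
  { apply real_unique. intros t.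
    generalize (series_Re _ _ (HD t)). 
    intros HH. eapply is_series_ext_l; [exact HH| |].
    - destruct (F t); simpl. apply Rplus_opp_r.
    - intros n. simpl. unfold Re, Im. ring. }
  assert (HIm : forall n, Im (c n) - Im (d n) = 0).
  { apply real_unique. intros t.
    generalize (series_Im _ _ (HD t)). 
    intros HH. eapply is_series_ext_l; [exact HH| |].
    - destruct (F t); simpl. apply Rplus_opp_r.
    - intros n. simpl. unfold Re, Im. ring. }
  intros n. specialize (HRe n). specialize (HIm n).
  destruct (c n) as [x y], (d n) as [u v]. simpl in *. f_equal; lra.
Qed.



Lemma egf_exp (w : C) (r : R) :
  egf (fun n => Cmult w (RtoC (r ^ n))) (fun t => Cmult w (RtoC (exp (r * t)))).
Proof.
  intros t.
  assert (H := is_exp_Reals (r * t)).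
  unfold is_pseries in H.
  apply series_RtoC in H.
  apply (@is_series_scal C_AbsRing C_NormedModule w) in H.
  eapply is_series_ext; [|exact H].
  intros n. simpl. rewrite pow_n_pow.
  unfold scal; simpl. unfold mult; simpl. unfold Cmult; simpl.
  assert (F := INR_fact_neq_0 n).
  destruct w as [a b]; simpl.
  rewrite Rpow_mult_distr.
  apply injective_projections; simpl; field; auto.
Qed.

Lemma egf_sum (c : nat -> nat -> C) (F : nat -> R -> C) K :
  (forall j, egf (c j) (F j)) ->
  egf (fun n => @sum_n C_Ring (fun j => c j n) K) (fun t => @sum_n C_Ring (fun j => F j t) K).
Proof.
  intros H t. induction K.
  - rewrite sum_O. eapply is_series_ext; [|apply (H 0%nat t)]. intros n. simpl. now rewrite sum_O.
  - rewrite sum_Sn.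
    assert (HH := @is_series_plus C_AbsRing C_NormedModule _ _ _ _ IHK (H (S K) t)).
    eapply is_series_ext; [|exact HH]. intros n. simpl. rewrite sum_Sn.
    change (plus ?a ?b) with (Cplus a b). ring.
Qed.



Fixpoint bin (n j : nat) : R :=
  match n, j with
  | O, O => 1
  | O, S _ => 0
  | S n', O => 1
  | S n', S j' => bin n' j' + bin n' (S j')
  end.

Lemma bin_big n j : (n < j)%nat -> bin n j = 0.
Proof.
  revert j; induction n; intros j H; destruct j; try lia; simpl; auto.
  rewrite !IHn; try lia. ring.
Qed.

Lemma Cn0 n : Binomial.C n 0 = 1.
Proof. unfold Binomial.C. rewrite Nat.sub_0_r. simpl. field. apply INR_fact_neq_0. Qed.
Lemma Cnn n : Binomial.C n n = 1.
Proof. unfold Binomial.C. rewrite Nat.sub_diag. simpl. field. apply INR_fact_neq_0. Qed.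

Lemma bin_n0 n : bin n 0 = 1.
Proof. destruct n; reflexivity. Qed.

Lemma bin_C n j : (j <= n)%nat -> bin n j = Binomial.C n j.
Proof.
  revert j; induction n; intros j H.
  - destruct j; [|lia]. simpl. rewrite Cn0. reflexivity.
  - destruct j.
    + simpl. rewrite Cn0. reflexivity.
    + simpl. destruct (Nat.eq_dec j n) as [->|Hn].
      * rewrite (bin_big n (S n)) by lia. rewrite IHn by lia. rewrite !Cnn. ring.
      * rewrite !IHn by lia. apply Binomial.pascal. lia.
Qed.

Lemma sum_shift (f : nat -> C) k :
  @sum_n C_Ring f (S k) = Cplus (f 0%nat) (@sum_n C_Ring (fun j => f (S j)) k).
Proof.
  induction k.
  - rewrite sum_Sn, !sum_O. reflexivity.
  - rewrite sum_Sn, IHk, sum_Sn. change (plus ?a ?b) with (Cplus a b). rewrite Cplus_assoc. reflexivity.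
Qed.

Lemma Cbinom (z : C) k :
  Cpow (Cplus z (RtoC 1)) k = @sum_n C_Ring (fun j => Cmult (RtoC (bin k j)) (Cpow z j)) k.
Proof.
  induction k.
  - rewrite sum_O. simpl. apply injective_projections; simpl; ring.
  - set (f := fun j => Cmult (RtoC (bin k j)) (Cpow z j)).
    set (S1 := @sum_n C_Ring f k).
    set (S2 := @sum_n C_Ring (fun j => f (S j)) k).
    assert (E : Cplus S1 (f (S k)) = Cplus (f 0%nat) S2).
    { unfold S1, S2. rewrite <- sum_shift. rewrite sum_Sn. reflexivity. }
    assert (E0 : f (S k) = RtoC 0). { unfold f. rewrite bin_big by lia. 
       apply injective_projections; simpl; ring. }
    assert (E1 : f 0%nat = RtoC 1). { unfold f. rewrite bin_n0. simpl. 
       apply injective_projections; simpl; ring. }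
    rewrite sum_shift.
    assert (E2 : @sum_n C_Ring (fun j => Cmult (RtoC (bin (S k) (S j))) (Cpow z (S j))) k
       = Cplus (Cmult z S1) S2).
    { unfold S1, S2. rewrite <- (@sum_n_mult_l C_Ring).
      rewrite <- (@sum_n_plus C_Ring). apply sum_n_ext. intros j.
      unfold f. simpl. rewrite RtoC_plus. change (mult ?a ?b) with (Cmult a b).
      change (plus ?a ?b) with (Cplus a b). ring. }
    rewrite E2. simpl Cpow. rewrite IHk. fold f. fold S1.
    simpl bin. 
    rewrite E0, E1 in E.
    assert (S1 = Cplus (RtoC 1) S2).
    { rewrite <- E. apply injective_projections; simpl; ring. }
    rewrite H. apply injective_projections; simpl; ring.
Qed.



Definition W (k : nat) (lam : C) (j : nat) : C :=
  Cmult (RtoC (bin k j / INR (fact k))) (Cpow lam j).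

Lemma exp_pow' (a : R) j : exp a ^ j = exp (INR j * a).
Proof.
  induction j. simpl. rewrite Rmult_0_l, exp_0. reflexivity.
  rewrite S_INR. simpl pow. rewrite IHj, <- exp_plus. f_equal. ring.
Qed.

Lemma egf_ext c F G : egf c F -> (forall t, F t = G t) -> egf c G.
Proof. intros H E t. rewrite <- E. apply H. Qed.

Lemma gen_y3_expand k lam x t :
  gen_y3 k lam 1 x t =
  @sum_n C_Ring (fun j => Cmult (W k lam j) (RtoC (exp ((x * INR k + INR j * (1 - x)) * t)))) k.
Proof.
  unfold gen_y3. rewrite Cbinom.
  rewrite <- (@sum_n_mult_l C_Ring). apply sum_n_ext. intros j.
  change (mult ?a ?b) with (Cmult a b).
  rewrite Cpow_mult_l, <- RtoC_pow, exp_pow'.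
  replace (exp ((x * INR k + INR j * (1 - x)) * t)) with
    (exp (x * INR k * t) * exp (INR j * ((1 - x) * t))).
  2:{ rewrite <- exp_plus. f_equal. ring. }
  unfold W. generalize (Cpow lam j). intros [a b].
  assert (Fk := INR_fact_neq_0 k).
  apply injective_projections; simpl; field; auto.
Qed.

Lemma gen_y1_expand k lam t :
  gen_y1 k lam t =
  @sum_n C_Ring (fun j => Cmult (W k lam j) (RtoC (exp (INR j * t)))) k.
Proof.
  unfold gen_y1. rewrite Cbinom.
  rewrite <- (@sum_n_mult_l C_Ring). apply sum_n_ext. intros j.
  change (mult ?a ?b) with (Cmult a b).
  rewrite Cpow_mult_l, <- RtoC_pow, exp_pow'.
  unfold W. generalize (Cpow lam j). intros [a b].
  assert (Fk := INR_fact_neq_0 k).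
  apply injective_projections; simpl; field; auto.
Qed.

Lemma y3_explicit k lam (y3 : nat -> R -> C)
  (Hy3 : forall x : R, egf (fun m => y3 m x) (gen_y3 k lam 1 x)) n x :
  y3 n x = @sum_n C_Ring (fun j => Cmult (W k lam j) (RtoC ((x * INR k + INR j * (1 - x)) ^ n))) k.
Proof.
  symmetry.
  refine (egf_unique (fun n => @sum_n C_Ring (fun j => Cmult (W k lam j) (RtoC ((x * INR k + INR j * (1 - x)) ^ n))) k) (fun m => y3 m x) (gen_y3 k lam 1 x) _ (Hy3 x) n).
  eapply egf_ext.
  - apply (egf_sum (fun j n => Cmult (W k lam j) (RtoC ((x * INR k + INR j * (1 - x)) ^ n)))
             (fun j t => Cmult (W k lam j) (RtoC (exp ((x * INR k + INR j * (1 - x)) * t))))).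
    intros j. apply egf_exp.
  - intros t. simpl. rewrite gen_y3_expand. reflexivity.
Qed.

Lemma y1_explicit k lam (y1 : nat -> C)
  (Hy1 : egf y1 (gen_y1 k lam)) n :
  y1 n = @sum_n C_Ring (fun j => Cmult (W k lam j) (RtoC (INR j ^ n))) k.
Proof.
  symmetry.
  refine (egf_unique (fun n => @sum_n C_Ring (fun j => Cmult (W k lam j) (RtoC (INR j ^ n))) k) y1 (gen_y1 k lam) _ Hy1 n).
  eapply egf_ext.
  - apply (egf_sum (fun j n => Cmult (W k lam j) (RtoC (INR j ^ n)))
             (fun j t => Cmult (W k lam j) (RtoC (exp (INR j * t))))).
    intros j. apply egf_exp.
  - intros t. simpl. rewrite gen_y1_expand. reflexivity.
Qed.



Lemma geom a b n : (a - b) * sum_f_R0 (fun m => a ^ m * b ^ (n - m)) n = a ^ S n - b ^ S n.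
Proof.
  induction n.
  - simpl. ring.
  - simpl sum_f_R0.
    rewrite (sum_eq (fun m => a ^ m * b ^ (S n - m)) (fun m => (a ^ m * b ^ (n - m)) * b)).
    2:{ intros i Hi. replace (S n - i)%nat with (S (n - i)) by lia. simpl. ring. }
    rewrite <- scal_sum.
    rewrite Nat.sub_diag.
    transitivity (b * ((a - b) * sum_f_R0 (fun m => a ^ m * b ^ (n - m)) n) + (a - b) * a ^ S n).
    { simpl. ring. }
    rewrite IHn. simpl. ring.
Qed.

Lemma is_RInt_l (f : R -> R) a b l l' : is_RInt f a b l -> l = l' -> is_RInt f a b l'.
Proof. intros H E; subst; exact H. Qed.

Lemma int_real (a b : R) n :
  is_RInt (fun x => (x * a + b * (1 - x)) ^ n) 0 1
    (sum_f_R0 (fun m => a ^ m * b ^ (n - m)) n / INR (n + 1)).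
Proof.
  assert (Hn : INR (n + 1) <> 0) by (apply not_0_INR; lia).
  destruct (Req_dec a b) as [<-|Hab].
  - eapply is_RInt_ext with (f := fun _ => a ^ n).
    { intros x _. f_equal. ring. }
    eapply is_RInt_l. apply is_RInt_const.
    rewrite (sum_eq _ (fun _ => a ^ n)).
    2:{ intros i Hi. rewrite <- pow_add. f_equal. lia. }
    rewrite sum_cte. replace (INR (n + 1)) with (INR (S n)) by (f_equal; lia).
    rewrite S_INR. unfold scal; simpl; unfold mult; simpl. field. rewrite <- S_INR. apply not_0_INR; lia.
  - assert (Hd : a - b <> 0) by lra.
    set (F := fun x => (x * a + b * (1 - x)) ^ S n / (INR (n + 1) * (a - b))).
    eapply is_RInt_l.
    + apply (is_RInt_derive F).
      * intros x _. unfold F. auto_derive. trivial.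
        change (match n with 0%nat => 1 | S _ => INR n + 1 end) with (INR (S n)). replace (INR (n + 1)) with (INR (S n)) by (f_equal; lia). replace (1 + - x) with (1 - x) by ring. field. split; auto. apply not_0_INR; lia.
      * intros x _. apply (@ex_derive_continuous R_AbsRing R_NormedModule). auto_derive. trivial.
    + unfold F, minus, plus, opp; simpl.
      replace (1 * a + b * (1 - 1)) with a by ring.
      replace (0 * a + b * (1 - 0)) with b by ring.
      assert (Gm := geom a b n). simpl in Gm. rewrite <- (Rmult_1_l (sum_f_R0 _ n)), <- (Rinv_l (a - b) Hd), Rmult_assoc, Gm. field. split; auto.
Qed.



Lemma int_C (w : C) (p : R -> R) v :
  is_RInt p 0 1 v ->
  @is_RInt C_R_CompleteNormedModule (fun x => Cmult w (RtoC (p x))) 0 1 (Cmult w (RtoC v)).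
Proof.
  intros H.
  apply (@is_RInt_fct_extend_pair R_NormedModule R_NormedModule (fun x => Cmult w (RtoC (p x))) 0 1 (fst (Cmult w (RtoC v))) (snd (Cmult w (RtoC v)))).
  - simpl. apply (@is_RInt_ext R_NormedModule) with (f := fun t => scal (fst w) (p t)).
    { intros x _. unfold scal; simpl; unfold mult; simpl. ring. }
    replace (fst w * v - snd w * 0) with (scal (fst w) v).
    2:{ unfold scal; simpl; unfold mult; simpl. ring. }
    apply (@is_RInt_scal R_NormedModule). exact H.
  - simpl. apply (@is_RInt_ext R_NormedModule) with (f := fun t => scal (snd w) (p t)).
    { intros x _. unfold scal; simpl; unfold mult; simpl. ring. }
    replace (fst w * 0 + snd w * v) with (scal (snd w) v).
    2:{ unfold scal; simpl; unfold mult; simpl. ring. }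
    apply (@is_RInt_scal R_NormedModule). exact H.
Qed.



Lemma int_C_sum (f : nat -> R -> C) (l : nat -> C) K :
  (forall j, @is_RInt C_R_CompleteNormedModule (f j) 0 1 (l j)) ->
  @is_RInt C_R_CompleteNormedModule (fun x => Csum (fun j => f j x) K) 0 1
     (Csum l K).
Proof.
  intros H. induction K.
  - unfold Csum. rewrite sum_O.
    apply (@is_RInt_ext C_R_CompleteNormedModule) with (f := f 0%nat).
    + intros x _. now rewrite sum_O.
    + apply H.
  - unfold Csum in *. rewrite sum_Sn.
    assert (HP := @is_RInt_plus C_R_CompleteNormedModule _ _ _ _ _ _ IHK (H (S K))).
    apply (@is_RInt_ext C_R_CompleteNormedModule) with (f := fun x => plus (@sum_n C_Ring (fun j => f j x) K) (f (S K) x)).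
    { intros x _. now rewrite sum_Sn. }
    exact HP.
Qed.



Lemma sum_swap (g : nat -> nat -> C) N K :
  @sum_n C_Ring (fun m => @sum_n C_Ring (fun j => g m j) K) N =
  @sum_n C_Ring (fun j => @sum_n C_Ring (fun m => g m j) N) K.
Proof.
  induction N.
  - rewrite sum_O. apply sum_n_ext. intros j. now rewrite sum_O.
  - rewrite sum_Sn, IHN.
    rewrite <- (@sum_n_plus C_Ring). apply sum_n_ext. intros j. now rewrite sum_Sn.
Qed.

Lemma RtoC_sumf (a : nat -> R) N :
  RtoC (sum_f_R0 a N) = @sum_n C_Ring (fun m => RtoC (a m)) N.
Proof.
  induction N.
  - rewrite sum_O. reflexivity.
  - rewrite sum_Sn. simpl sum_f_R0. rewrite RtoC_plus, IHN. reflexivity.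
Qed.

Definition Sj (k j n : nat) := sum_f_R0 (fun m => INR k ^ m * INR j ^ (n - m)) n.

Lemma int_y3 k lam (y3 : nat -> R -> C)
  (Hy3 : forall x : R, egf (fun m => y3 m x) (gen_y3 k lam 1 x)) n :
  CRInt (fun x => y3 n x) 0 1 =
  Csum (fun j => Cmult (W k lam j) (RtoC (Sj k j n / INR (n + 1)))) k.
Proof.
  unfold CRInt. apply (@is_RInt_unique C_R_CompleteNormedModule).
  apply (@is_RInt_ext C_R_CompleteNormedModule) with (f := fun x => Csum (fun j => Cmult (W k lam j) (RtoC ((x * INR k + INR j * (1 - x)) ^ n))) k).
  { intros x _. symmetry. apply y3_explicit. exact Hy3. }
  apply int_C_sum. intros j. apply int_C. apply int_real.
Qed.

Theorem mainTheorem5 (lam : C) (n k : nat)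
  (y3 : nat -> R -> C) (y1 : nat -> C)
  (Hy3 : forall x : R, egf (fun m => y3 m x) (gen_y3 k lam 1 x))
  (Hy1 : egf y1 (gen_y1 k lam)) :
  CRInt (fun x => y3 n x) 0 1
    = Cmult (RtoC (/ INR (n + 1)))
            (Csum (fun m => Cmult (RtoC (INR k ^ m)) (y1 (n - m)%nat)) n)
  /\
  CRInt (fun x => y3 n x) 0 1
    = Cmult (RtoC (/ (INR (n + 1) * INR (fact k))))
            (Csum (fun j => Cmult (Cmult (RtoC (Binomial.C k j)) (Cpow lam j))
                     (RtoC (sum_f_R0 (fun m => INR k ^ m * INR j ^ (n - m)) n))) k).
Proof.
  assert (Hn : INR (n + 1) <> 0) by (apply not_0_INR; lia).
  assert (Fk := INR_fact_neq_0 k).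
  rewrite (int_y3 k lam y3 Hy3 n). split.
  - unfold Csum.
    rewrite (sum_n_ext (fun m => Cmult (RtoC (INR k ^ m)) (y1 (n - m)%nat))
      (fun m => @sum_n C_Ring (fun j => Cmult (RtoC (INR k ^ m)) (Cmult (W k lam j) (RtoC (INR j ^ (n - m))))) k)).
    2:{ intros m. rewrite (y1_explicit k lam y1 Hy1). rewrite <- (@sum_n_mult_l C_Ring). reflexivity. }
    rewrite sum_swap.
    rewrite <- (@sum_n_mult_l C_Ring). apply sum_n_ext. intros j.
    assert (E : @sum_n C_Ring (fun m => Cmult (RtoC (INR k ^ m)) (Cmult (W k lam j) (RtoC (INR j ^ (n - m))))) n
               = Cmult (W k lam j) (RtoC (Sj k j n))).
    { unfold Sj. rewrite RtoC_sumf. rewrite <- (@sum_n_mult_l C_Ring). apply sum_n_ext. intros m.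
      change (mult ?a ?b) with (Cmult a b). rewrite RtoC_mult.
      generalize (W k lam j). intros [a b]. apply injective_projections; simpl; ring. }
    rewrite E. change (mult ?a ?b) with (Cmult a b).
    generalize (W k lam j). intros [a b]. apply injective_projections; simpl; field; auto.
  - unfold Csum. rewrite <- (@sum_n_mult_l C_Ring). apply sum_n_ext_loc. intros j Hj.
    change (mult ?a ?b) with (Cmult a b).
    unfold W. rewrite bin_C by lia. unfold Sj.
    generalize (Cpow lam j). intros [a b]. apply injective_projections; simpl; field; auto.
Qed.
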